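(* Let $\mathcal{T}=(X,\mathcal{B},\mathcal{G})$ be a $\mathrm{TD}_\lambda(\ell,s)$ and let $q=p^e$ with $p$ prime. If $p\nmid \lambda s$, then $$\mathrm{Code}_q(\mathcal{T})\subseteq\{c\in\mathbb{F}_q^{X}:\ \text{for every } G\in\mathcal{G},\ c_{|G}\in\mathrm{Rep}(s)\},$$ where $\mathrm{Rep}(s)$ is the repetition code of length $s$ (i.e. $c$ is constant on each group). In particular, if $p\nmid\lambda s$ then $\dim_{\mathbb{F}_q}\mathrm{Code}_q(\mathcal{T})\le\ell$.
   Context: A transversal design $\mathrm{TD}_\lambda(\ell,s)$ ($s,\ell\ge2$, $\lambda\ge1$) is a triple $(X,\mathcal{B},\mathcal{G})$ where $X$ is a finite set of points, $\mathcal{B}$ a collection of subsets of $X$ (blocks), and $\mathcal{G}=\{G_1,\dots,G_\ell\}$ a partition of $X$ (groups) such that $|X|=\ell s$, every group has size $s$, every block has size $\ell$, and every unordered pair of distinct points of $X$ is contained either in one group and no block, or in no group and exactly $\lambda$ blocks. For a block design $(X,\mathcal{B})$, $\mathrm{Code}_q$ of the design is the $\mathbb{F}_q$-linear code $\{c\in\mathbb{F}_q^X:\ \sum_{x\in B}c_x=0\ \forall B\in\mathcal{B}\}$. For $c\in\mathbb{F}_q^X$ and $T\subseteq X$, $c_{|T}=(c_t)_{t\in T}$. *)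

(* Defs.v *)
From HB Require Import structures.
From mathcomp Require Import all_boot all_order all_algebra all_field.
Set Implicit Arguments. Unset Strict Implicit. Unset Printing Implicit Defensive.
Import GRing.Theory.
Local Open Scope ring_scope.

(* A transversal design TD_lam(l, s) on the finite point set X:
   blocks B is a collection (list, repetitions allowed) of subsets of X,
   groups G is a set of subsets of X forming a partition of X. *)
Definition is_TD (X : finType) (lam l s : nat)
    (B : seq {set X}) (G : {set {set X}}) : Prop :=
  [/\ (2 <= s)%N /\ (2 <= l)%N /\ (1 <= lam)%N,
      partition G [set: X] /\ #|G| = l,
      #|X| = (l * s)%N /\ (forall g, g \in G -> #|g| = s),
      (forall b, b \in B -> #|b| = l) &
      (forall x y : X, x != y ->
         if [exists g in G, (x \in g) && (y \in g)]
         then count (fun b : {set X} => (x \in b) && (y \in b)) B = 0%N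
         else count (fun b : {set X} => (x \in b) && (y \in b)) B = lam)].

Definition block_sums (F : fieldType) (X : finType) (B : seq {set X})
    (c : {ffun X -> F^o}) : {ffun 'I_(size B) -> F^o} :=
  [ffun i : 'I_(size B) => \sum_(x in nth set0 B i) c x].

Definition design_code (F : fieldType) (X : finType) (B : seq {set X})
    : {vspace {ffun X -> F^o}} :=
  lker (linfun (block_sums (F:=F) B)).

(* Main.v *)
Require Import Defs.
From HB Require Import structures.
From mathcomp Require Import all_boot all_order all_algebra all_field.
From mathcomp Require Import zify.
From Stdlib Require Import Lia.
Import GRing.Theory.
Local Open Scope ring_scope.

Section Aux.
Variables (F : fieldType) (X : finType) (B : seq {set X}).

Fact block_sums_lin : linear (block_sums (F:=F) B).
Proof.
move=> a u v; apply/ffunP => i; rewrite !ffunE.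
rewrite scaler_sumr -big_split; apply: eq_bigr => x _; by rewrite !ffunE.
Qed.
HB.instance Definition _ := GRing.isLinear.Build F _ _ _ (block_sums (F:=F) B)
  block_sums_lin.

Lemma code_mem c : c \in design_code F B ->
  forall b, b \in B -> \sum_(x in b) c x = 0.
Proof.
rewrite /design_code memv_ker lfunE => /eqP H b bB.
have iB : (index b B < size B)%N by rewrite index_mem.
have := congr1 (fun f : {ffun 'I_(size B) -> F^o} => f (Ordinal iB)) H.
by rewrite /= ffunE nth_index // ffunE.
Qed.
End Aux.

Lemma sum_exch (V : nmodType) (X : finType) (B : seq {set X}) (x : X) (f : X -> V) :
  \sum_(b <- B) (if x \in b then \sum_(z in b) f z else 0) =
  \sum_z f z *+ count (fun b : {set X} => (x \in b) && (z \in b)) B.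
Proof.
elim: B => [|b B IH]; first by rewrite big_nil big1 // => z _; rewrite mulr0n.
rewrite big_cons IH.
under [RHS]eq_bigr => z _ do rewrite /= mulrnDr.
rewrite big_split /=; congr (_ + _).
case: (x \in b) => /=; last by rewrite big1 // => z _; rewrite mulr0n.
by rewrite big_mkcond; apply: eq_bigr => z _; case: (z \in b).
Qed.

Lemma sum_exch_nat (X : finType) (B : seq {set X}) (x : X) :
  (\sum_(b <- B | x \in b) #|b| =
  \sum_z count (fun b : {set X} => (x \in b) && (z \in b)) B)%N.
Proof.
elim: B => [|b B IH]; first by rewrite big_nil big1.
rewrite big_cons IH.
under [RHS]eq_bigr => z _ do rewrite /=.
rewrite big_split /=.
case: (x \in b) => /=.
  f_equal; by rewrite -sum1_card big_mkcond.
by rewrite [X in (X + _)%N]big1 ?add0n.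
Qed.

Theorem mainTheorem2 (X : finType) (lam l s : nat)
    (B : seq {set X}) (G : {set {set X}})
    (F : finFieldType) (p e : nat) :
  is_TD lam l s B G ->
  prime p -> #|F| = (p ^ e)%N ->
  ~~ (p %| lam * s)%N ->
  (forall c : {ffun X -> F^o},
     c \in design_code F B ->
     forall g, g \in G -> forall x y, x \in g -> y \in g -> c x = c y)
  /\ (\dim (design_code F B) <= l)%N.
Proof.
move=> [[s2 [l2 lam1]] [/and3P [covG trivG nz0] cardG] [cardX cardg] cardB pairs]
  pp cardF ndvd.
have inG g x : g \in G -> x \in g -> pblock G x = g := def_pblock trivG.
have charp : p \in [pchar F] := card_finPcharP cardF pp.
have nz : (lam * s)%:R != 0 :> F by rewrite -(dvdn_pcharf charp).
have ncount g x z : g \in G -> x \in g ->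
  count (fun b : {set X} => (x \in b) && (z \in b)) B =
  ((if z == x then count (fun b : {set X} => x \in b) B else 0)
   + (if z \in g then 0 else lam))%N.
  move=> gG xg; case: eqP => [->|zx].
    by rewrite xg addn0; apply: eq_count => b; rewrite andbb.
  have xz : x != z by apply/eqP => E; apply: zx.
  have := pairs x z xz; case: ifP => [/existsP [g' /and3P [g'G xg' zg']] | nex].
    have eg : g' = g by rewrite -(inG _ _ g'G xg') (inG _ _ gG xg).
    by rewrite -eg zg'.
  case zg: (z \in g) => //.
  have : [exists g0 in G, (x \in g0) && (z \in g0)].
    by apply/existsP; exists g; rewrite gG xg zg.
  by rewrite nex.
have rr g x : g \in G -> x \in g -> count (fun b : {set X} => x \in b) B = (lam * s)%N.
  move=> gG xg; have E := sum_exch_nat _ B x.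
  rewrite (_ : (\sum_(b <- B | x \in b) #|b| = \sum_(b <- B | x \in b) (l * 1))%N) in E; last first.
    rewrite big_seq_cond [RHS]big_seq_cond; apply: eq_bigr => b /andP [bB _].
    by rewrite cardB // muln1.
  rewrite -big_distrr sum1_count /= in E.
  rewrite (eq_bigr _ (fun z _ => ncount g x z gG xg)) in E.
  rewrite big_split /= (bigD1 x) //= eqxx big1 ?addn0 in E; last first.
    by move=> z /negbTE ->.
  rewrite (_ : (\sum_z (if z \in g then 0 else lam) = \sum_(z in ~: g) lam)%N) in E; last first.
    rewrite [RHS]big_mkcond; apply: eq_bigr => z _; rewrite in_setC.
    by case: (z \in g).
  rewrite sum_nat_const in E.
  have := cardsC g; rewrite (cardg _ gG) ?cardsT ?cardX => H.
  nia.
have part1 : forall c : {ffun X -> F^o},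
     c \in design_code F B ->
     forall g, g \in G -> forall x y, x \in g -> y \in g -> c x = c y.
  move=> c cC g gG.
  pose T := \sum_z c z *+ (if z \in g then 0 else lam)%N.
  have key x : x \in g -> c x *+ (lam * s) + T = 0.
    move=> xg.
    have E2 : \sum_z c z *+ count (fun b : {set X} => (x \in b) && (z \in b)) B
              = c x *+ (lam * s) + T.
      transitivity (\sum_z (c z *+ (if z == x then (lam * s)%N else 0%N)
                     + c z *+ (if z \in g then 0%N else lam))).
        by apply: eq_bigr => z _; rewrite (ncount g x z gG xg) (rr g x gG xg) mulrnDr.
      rewrite big_split /= (bigD1 x) //= eqxx big1 ?addr0 // => z /negbTE ->.
      by rewrite mulr0n.
    rewrite -E2 -sum_exch big1_seq // => b /andP [_ bB]; case: ifP => // _.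
    exact: (code_mem _ _ _ _ cC _ bB).
  move=> x y xg yg.
  have Ex := key x xg; have Ey := key y yg.
  have E : c x *+ (lam * s) = c y *+ (lam * s) by apply: (addIr T); rewrite Ex Ey.
  have E' : (c x - c y) * (lam * s)%:R = 0 :> F.
    by rewrite mulrBl !mulr_natr E subrr.
  move/eqP: E'; rewrite mulf_eq0 (negbTE nz) orbF subr_eq0 => /eqP.
  done.
split => //.
pose ind (g : {set X}) : {ffun X -> F^o} := [ffun z => if z \in g then 1 else 0].
pose vs := [seq ind g | g <- enum G].
have sub : (design_code F B <= <<vs>>)%VS.
  apply/subvP => c cC.
  pose co (g : {set X}) : F^o := if [pick z in g] is Some z then c z else 0.
  have -> : c = \sum_(g in G) co g *: ind g.
    apply/ffunP => z; rewrite sum_ffunE.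
    have zc : z \in cover G by rewrite (eqP covG) inE.
    have g0G := pblock_mem zc.
    have zg0 : z \in pblock G z by rewrite mem_pblock.
    rewrite (bigD1 (pblock G z)) //= big1 => [|g /andP [gG ng]].
      rewrite !ffunE zg0 addr0 /co /GRing.scale /= mulr1.
      case: pickP => [z' z'g|/(_ z)]; last by rewrite zg0.
      exact: (part1 c cC _ g0G z z' zg0 z'g).
    rewrite !ffunE; case: ifP => zg; last by rewrite scaler0.
    by rewrite -(inG _ _ gG zg) eqxx in ng.
  apply: memv_suml => g gG; apply: memvZ; apply: memv_span; apply: map_f.
  by rewrite mem_enum.
rewrite (leq_trans (dimvS sub)) // (leq_trans (dim_span vs)) //.
by rewrite size_map -cardE cardG.
Qed.
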